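(* Let $\sigma:\mathcal{A}^*\to\mathcal{B}^*$ be an injective and strongly left proper morphism. The following are equivalent: (1) the sets $\mathcal{T}^-(\sigma)$ and $\mathcal{T}^+(\sigma)$ each contain exactly one element; (2) for every shift space $X$ over $\mathcal{A}$ and every dendric bispecial factor $v\in\mathcal{L}(X)$, $\sigma$ is dendric preserving for $v$.
   Context: A shift space over $\mathcal{A}$ is a closed shift-invariant $X\subseteq\mathcal{A}^{\mathbb{Z}}$ in which all letters occur, with factor set $\mathcal{L}(X)$. For $w\in\mathcal{L}(X)$: $E^-_X(w)=\{a:aw\in\mathcal{L}(X)\}$, $E^+_X(w)=\{b:wb\in\mathcal{L}(X)\}$, $E_X(w)=\{(a,b):awb\in\mathcal{L}(X)\}$; $\mathcal{E}_X(w)$ is the bipartite graph with left vertices $E^-_X(w)$, right vertices $E^+_X(w)$ and edges $E_X(w)$; $w$ is bispecial if $\#E^\pm_X(w)\ge2$, dendric if $\mathcal{E}_X(w)$ is a tree. Morphisms are non-erasing; $\sigma$ is strongly left proper with first letter $\ell$ if every $\sigma(a)$ begins with $\ell$ and contains $\ell$ exactly once. Image of $X$: $Y=\{S^k\sigma(x):x\in X,0\le k<|\sigma(x_0)|\}$. For non-empty $u\in\mathcal{L}(Y)$ containing $\ell$ there is a unique triple $(s,v,p)$, $v\in\mathcal{L}(X)$, $u=s\sigma(v)p$, with $s$ a proper suffix of $\sigma(a)$, $p$ a non-empty prefix of $\sigma(b)$ for some $(a,b)\in E_X(v)$; $u$ is then an extended image of $v$. $\sigma$ is dendric preserving for $v$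 if every bispecial extended image of $v$ is dendric in $Y$. $\mathcal{T}^-(\sigma)=\{s(a_1,a_2):a_1,a_2\in\mathcal{A},a_1\ne a_2\}$ and $\mathcal{T}^+(\sigma)=\{p(b_1,b_2):b_1\ne b_2\}$, where $s(a_1,a_2)$ (resp. $p(b_1,b_2)$) is the longest common suffix of $\sigma(a_1),\sigma(a_2)$ (resp. longest common prefix of $\sigma(b_1),\sigma(b_2)$). *)

(* Defs.v *)
From mathcomp Require Import all_boot all_algebra.
From mathcomp Require Import boolp.
Set Implicit Arguments. Unset Strict Implicit. Unset Printing Implicit Defensive.
Import GRing.Theory Num.Theory.

Definition morph (A B : Type) (sigma : A -> seq B) (w : seq A) : seq B :=
  flatten (map sigma w).

Definition non_erasing (A B : Type) (sigma : A -> seq B) : Prop :=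
  forall a, sigma a <> [::].

Definition strongly_left_proper_with (A : Type) (B : eqType)
  (sigma : A -> seq B) (l : B) : Prop :=
  forall a, (exists w, sigma a = l :: w) /\ count_mem l (sigma a) = 1%N.

Definition strongly_left_proper (A : Type) (B : eqType) (sigma : A -> seq B) :=
  exists l, strongly_left_proper_with sigma l.

Fixpoint lcp (B : eqType) (u v : seq B) : seq B :=
  match u, v with
  | x :: u', y :: v' => if x == y then x :: lcp u' v' else [::]
  | _, _ => [::]
  end.

Definition lcs (B : eqType) (u v : seq B) : seq B := rev (lcp (rev u) (rev v)).

Definition Tminus (A B : eqType) (sigma : A -> seq B) (t : seq B) : Prop :=
  exists a1 a2, a1 != a2 /\ t = lcs (sigma a1) (sigma a2).
Definition Tplus (A B : eqType) (sigma : A -> seq B) (t : seq B) : Prop :=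
  exists b1 b2, b1 != b2 /\ t = lcp (sigma b1) (sigma b2).

Definition shiftk (A : Type) (k : int) (x : int -> A) : int -> A :=
  fun n => x (n + k)%R.

Definition window (A : Type) (x : int -> A) (i : int) (m : nat) : seq A :=
  [seq x (i + (k%:Z))%R | k <- iota 0 m].

(* a closed (in the product topology of the discrete alphabet),
   shift-invariant (S(X) = X) set in which all letters occur *)
Definition closed_set (A : Type) (X : (int -> A) -> Prop) : Prop :=
  forall x, (forall N : nat, exists y, X y /\
               forall n : int, (`|n| <= N)%N -> y n = x n) -> X x.

Definition shift_space (A : Type) (X : (int -> A) -> Prop) : Prop :=
  [/\ closed_set X,
      forall x, X x <-> X (shiftk 1 x)
    & forall a : A, exists x, X x /\ exists n, x n = a].

(* the factor set L(X) (contains the empty word) *)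
Definition lang (A : Type) (X : (int -> A) -> Prop) (w : seq A) : Prop :=
  exists x, X x /\ exists i, w = window x i (size w).

(* position in sigma(x) of the beginning of sigma(x_j); sigma(x_0) starts at 0 *)
Definition img_pos (A B : Type) (sigma : A -> seq B) (x : int -> A) (j : int)
  : int :=
  match j with
  | Posz n => Posz (\sum_(k < n) size (sigma (x (Posz k))))%N
  | Negz n => (- Posz (\sum_(k < n.+1) size (sigma (x (Negz k))))%N)%R
  end.

(* z is the bi-infinite word ... sigma(x_{-1}) . sigma(x_0) sigma(x_1) ... *)
Definition is_img (A B : Type) (sigma : A -> seq B) (x : int -> A)
  (z : int -> B) : Prop :=
  forall j : int, window z (img_pos sigma x j) (size (sigma (x j))) = sigma (x j).

Definition image_shift (A B : Type) (sigma : A -> seq B)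
  (X : (int -> A) -> Prop) : (int -> B) -> Prop :=
  fun y => exists x, X x /\ exists k : nat, (k < size (sigma (x 0%R)))%N /\
    exists z, is_img sigma x z /\ y = shiftk (k%:Z) z.

Section Ext.
Variables (A : finType) (L : seq A -> Prop).

Definition Eminus (w : seq A) : {set A} := [set a | `[< L (a :: w) >]].
Definition Eplus (w : seq A) : {set A} := [set b | `[< L (rcons w b) >]].
Definition Eboth (w : seq A) (a b : A) : Prop := L (a :: rcons w b).

Definition bispecial (w : seq A) : Prop :=
  L w /\ (2 <= #|Eminus w|)%N /\ (2 <= #|Eplus w|)%N.

(* the extension graph: left vertices inl a (a in E^-), right vertices
   inr b (b in E^+), undirected edges {inl a, inr b} for (a,b) in E(w) *)
Definition ext_vertex (w : seq A) (v : A + A) : bool :=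
  match v with inl a => a \in Eminus w | inr b => b \in Eplus w end.

Definition ext_edge (w : seq A) : rel (A + A) :=
  fun u v => match u, v with
  | inl a, inr b => `[< Eboth w a b >]
  | inr b, inl a => `[< Eboth w a b >]
  | _, _ => false
  end.

Definition is_tree (V : finType) (vert : pred V) (e : rel V) : Prop :=
  [/\ exists v, vert v,
      forall u v, vert u -> vert v -> connect e u v
    & ~ exists c : seq V, [/\ (3 <= size c)%N, all vert c, uniq c & cycle e c]].

Definition dendric (w : seq A) : Prop :=
  L w /\ is_tree (ext_vertex w) (ext_edge w).
End Ext.

Definition ext_image (A B : finType) (sigma : A -> seq B)
  (X : (int -> A) -> Prop) (v : seq A) (u : seq B) : Prop :=
  lang (image_shift sigma X) u /\
  exists a b s p, [/\ Eboth (lang X) v a b,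
     (exists s', s' != [::] /\ sigma a = s' ++ s),
     (exists p', p != [::] /\ sigma b = p ++ p')
   & u = s ++ morph sigma v ++ p].

Definition dendric_preserving (A B : finType) (sigma : A -> seq B)
  (X : (int -> A) -> Prop) (v : seq A) : Prop :=
  forall u, ext_image sigma X v u ->
    bispecial (lang (image_shift sigma X)) u ->
    dendric (lang (image_shift sigma X)) u.

(* Main.v *)
Require Import Defs.
From mathcomp Require Import all_boot all_algebra.
From mathcomp Require Import boolp.
From mathcomp Require Import zify.
Set Implicit Arguments. Unset Strict Implicit. Unset Printing Implicit Defensive.
Import GRing.Theory Num.Theory.


Section Gen.
Variable T : Type.

Lemma window_add (x : int -> T) i m1 m2 :
  window x i (m1 + m2) = window x i m1 ++ window x (i + m1%:Z)%R m2.
Proof.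
rewrite /window iotaD map_cat; congr (_ ++ _).
rewrite add0n -[m1 in iota m1 _]addn0 iotaDl -map_comp; apply: eq_map => k /=.
by rewrite PoszD addrA.
Qed.

Lemma size_window (x : int -> T) i m : size (window x i m) = m.
Proof. by rewrite /window size_map size_iota. Qed.

Lemma window_S (x : int -> T) i m : window x i m.+1 = x i :: window x (i + 1)%R m.
Proof. by rewrite -add1n window_add /window /= addr0. Qed.

Lemma window_rcons (x : int -> T) i m :
  window x i m.+1 = rcons (window x i m) (x (i + m%:Z)%R).
Proof. by rewrite -addn1 window_add /window /= addr0 cats1. Qed.

Lemma lang_rext (X : (int -> T) -> Prop) w : lang X w -> exists b, lang X (rcons w b).
Proof.
move=> [x [Xx [i Hi]]]; exists (x (i + (size w)%:Z)%R); exists x; split => //.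
exists i; by rewrite size_rcons window_rcons -Hi.
Qed.

Lemma lang_lext (X : (int -> T) -> Prop) w : lang X w -> exists a, lang X (a :: w).
Proof.
move=> [x [Xx [i Hi]]]; exists (x (i - 1)%R); exists x; split => //.
exists (i - 1)%R; by rewrite /= window_S subrK -Hi.
Qed.

Lemma cat_inj (s1 s2 s3 s4 : seq T) : size s1 = size s2 -> s1 ++ s3 = s2 ++ s4 -> s1 = s2 /\ s3 = s4.
Proof.
move=> Hs H; have := congr1 (take (size s1)) H; have := congr1 (drop (size s1)) H.
by rewrite !drop_size_cat // !take_size_cat.
Qed.

Lemma lang_infix (X : (int -> T) -> Prop) w1 w w2 : lang X (w1 ++ w ++ w2) -> lang X w.
Proof.
move=> [x [Xx [i Hi]]]; exists x; split => //.
exists (i + (size w1)%:Z)%R.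
move: Hi; rewrite !size_cat window_add window_add.
case/cat_inj; first by rewrite size_window.
by move=> _ /cat_inj [] // ; rewrite size_window.
Qed.

Lemma window_lang (X : (int -> T) -> Prop) x i m : X x -> lang X (window x i m).
Proof. move=> Xx; exists x; split => //; exists i; by rewrite size_window. Qed.

End Gen.


Lemma cat_le (T : Type) (s1 t1 s2 t2 : seq T) : s1 ++ t1 = s2 ++ t2 -> (size s1 <= size s2)%N ->
  exists r, s2 = s1 ++ r /\ t1 = r ++ t2.
Proof.
elim: s1 s2 => [|x s1 IH] [|y s2] //=.
- by move=> ->; exists [::].
- by move=> ->; exists (y :: s2).
- case=> -> H; rewrite ltnS => /(IH _ H) [r [-> ->]]; by exists r.
Qed.

Section Fl.
Variables (B : Type) (d0 : B) (f : nat -> seq B).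
Hypothesis Hf : forall i, (0 < size (f i))%N.
Definition Fl N := flatten [seq f i | i <- iota 0 N].
Lemma Fl_add N K : Fl (N + K) = Fl N ++ flatten [seq f i | i <- iota N K].
Proof. by rewrite /Fl iotaD map_cat flatten_cat. Qed.
Lemma Fl_S N : Fl N.+1 = Fl N ++ f N.
Proof. by rewrite -addn1 Fl_add /= cats0. Qed.
Lemma size_Fl N : (N <= size (Fl N))%N.
Proof. elim: N => [|N IH] //; rewrite Fl_S size_cat; have := Hf N; lia. Qed.
Lemma size_Fl_sum N : size (Fl N) = (\sum_(i < N) size (f i))%N.
Proof. elim: N => [|N IH]; first by rewrite big_ord0. by rewrite Fl_S size_cat big_ord_recr IH. Qed.
Lemma nth_Fl N k : (k < size (Fl N))%N -> nth d0 (Fl k.+1) k = nth d0 (Fl N) k.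
Proof.
move=> Hk; case: (leqP k.+1 N) => h.
- rewrite -(subnKC h) Fl_add nth_cat; have := size_Fl k.+1; by case: ltnP.
- have h' : (N <= k.+1)%N by apply: ltnW.
  rewrite -(subnKC h') Fl_add nth_cat Hk //.
Qed.
End Fl.

Section Img.
Variables (A B : finType) (sigma : A -> seq B) (l : B).
Hypothesis Hslp : strongly_left_proper_with sigma l.

Lemma nonerasing a : (0 < size (sigma a))%N.
Proof. by have [[w ->] _] := Hslp a. Qed.

Lemma morph_cat u v : morph sigma (u ++ v) = morph sigma u ++ morph sigma v.
Proof. by rewrite /morph map_cat flatten_cat. Qed.
Lemma morph_cons a u : morph sigma (a :: u) = sigma a ++ morph sigma u.
Proof. by []. Qed.
Lemma morph_rcons u a : morph sigma (rcons u a) = morph sigma u ++ sigma a.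
Proof. by rewrite -cats1 morph_cat /= /morph /= cats0. Qed.
Lemma size_morph u : (size u <= size (morph sigma u))%N.
Proof. elim: u => [|a u IH] //=; rewrite morph_cons size_cat; have := nonerasing a; lia. Qed.

Lemma sync x' al w : morph sigma x' = al ++ l :: w ->
  exists x1 x2, x' = x1 ++ x2 /\ morph sigma x1 = al /\ morph sigma x2 = l :: w.
Proof.
elim: x' al => [|a r IH] al.
  by case: al.
case: al => [|a0 al] H; first by exists [::], (a :: r).
rewrite morph_cons in H.
case: (leqP (size (sigma a)) (size (a0 :: al))) => h.
- have [r0 [E1 E2]] := cat_le H h.
  have [x1 [x2 [-> [H1 H2]]]] := IH _ E2.
  by exists (a :: x1), x2; rewrite morph_cons H1 -E1.
- have [r0 [E1 E2]] := cat_le (esym H) (ltnW h).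
  have [[w' Ew] Hc] := Hslp a.
  case: r0 E1 E2 h => [|c r0] E1 E2 h.
    by move: h; rewrite E1 cats0 ltnn.
  case: E2 => Ec _; subst c.
  move: Hc; rewrite E1; move: E1; rewrite Ew /= => -[Ea _]; subst a0.
  by rewrite count_cat /= eqxx; lia.
Qed.

Lemma img_step x j : img_pos sigma x (j + 1)%R = (img_pos sigma x j + (size (sigma (x j)))%:Z)%R.
Proof.
case: j => [n|[|m]].
- have -> : (Posz n + 1)%R = Posz n.+1 by lia.
  by rewrite /img_pos big_ord_recr /= PoszD.
- have -> : (Negz 0 + 1)%R = Posz 0 by lia.
  by rewrite /img_pos big_ord0 big_ord1 addNr.
- have -> : (Negz m.+1 + 1)%R = Negz m by lia.
  rewrite /img_pos [in RHS]big_ord_recr /= PoszD opprD -addrA addNr addr0 //.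
Qed.

Lemma img_block x z : is_img sigma x z -> forall m j,
  window z (img_pos sigma x j) (size (morph sigma (window x j m))) = morph sigma (window x j m).
Proof.
move=> Hz; elim=> [|m IH] j; first by rewrite /window.
rewrite window_S morph_cons size_cat window_add Hz -img_step IH //.
Qed.

Lemma img_pos_lower x t : exists j, (img_pos sigma x j <= t)%R.
Proof.
case: t => [n|n].
- exists (Posz 0); by rewrite /img_pos big_ord0.
- exists (Negz n); rewrite /img_pos.
  have : (n.+1 <= \sum_(k < n.+1) size (sigma (x (Negz k))))%N.
    rewrite -[X in (X <= _)%N]card_ord -sum1_card; apply: leq_sum => i _; exact: nonerasing.
  move: (\sum_(k < n.+1) _)%N => S; lia.
Qed.

Lemma window_shiftk (z : int -> B) k i n : window (shiftk k z) i n = window z (i + k)%R n.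
Proof. rewrite /window /shiftk; apply: eq_map => j; by rewrite addrAC. Qed.

Lemma Y1 (X : (int -> A) -> Prop) w : lang (image_shift sigma X) w ->
  exists x', lang X x' /\ exists al be, morph sigma x' = al ++ w ++ be.
Proof.
move=> [y [[x [Xx [k [Hk [z [Hz ->]]]]]] [i Hi]]].
rewrite window_shiftk in Hi.
set t := (i + k%:Z)%R in Hi.
have [j Hj] := img_pos_lower x t.
set P := img_pos sigma x j in Hj.
set d1 := absz (t - P)%R.
set m := (d1 + size w)%N.
exists (window x j m); split; first exact: window_lang.
have Hb := img_block Hz m j.
set L := size (morph sigma (window x j m)) in Hb.
have HL : (m <= L)%N by have := size_morph (window x j m); rewrite size_window.
have EL : L = (d1 + (size w + (L - m)))%N by rewrite /m; lia.
have Et : (P + d1%:Z)%R = t by rewrite /d1; lia.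
rewrite -Hb EL window_add window_add Et -Hi.
by eexists; eexists.
Qed.

Definition zimg (x : int -> A) : int -> B := fun n =>
  match n with
  | Posz k => nth l (Fl (fun i => sigma (x (Posz i))) k.+1) k
  | Negz k => nth l (Fl (fun i => rev (sigma (x (Negz i)))) k.+1) k
  end.

Lemma zimg_is_img x : is_img sigma x (zimg x).
Proof.
case=> [J|M].
- set f := (fun i => sigma (x (Posz i))).
  have Hf : forall i, (0 < size (f i))%N by move=> i; exact: nonerasing.
  have -> : img_pos sigma x (Posz J) = Posz (size (Fl f J)) by rewrite size_Fl_sum.
  apply: (@eq_from_nth _ l); rewrite size_window // => t Ht.
  rewrite /window (nth_map 0%N) ?size_iota // nth_iota // add0n -PoszD /=.
  rewrite (@nth_Fl _ _ _ Hf J.+1); last by rewrite Fl_S size_cat /f; lia.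
  rewrite Fl_S nth_cat; case: ltnP => h; first by move: h; rewrite /f; lia.
  by rewrite /f; congr nth; lia.
- set g := (fun i => rev (sigma (x (Negz i)))).
  have Hg : forall i, (0 < size (g i))%N by move=> i; rewrite size_rev; exact: nonerasing.
  have -> : img_pos sigma x (Negz M) = (- Posz (size (Fl g M.+1)))%R.
    rewrite size_Fl_sum /img_pos; congr (- Posz _)%R; apply: eq_bigr => i _; by rewrite size_rev.
  apply: (@eq_from_nth _ l); rewrite size_window // => t Ht.
  rewrite /window (nth_map 0%N) ?size_iota // nth_iota // add0n.
  have HT : size (Fl g M.+1) = (size (Fl g M) + size (sigma (x (Negz M))))%N.
    by rewrite Fl_S size_cat size_rev.
  have -> : (- Posz (size (Fl g M.+1)) + Posz t)%R = Negz (size (Fl g M.+1) - t.+1) by lia.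
  rewrite /= (@nth_Fl _ _ _ Hg M.+1); last by lia.
  rewrite HT Fl_S nth_cat; case: ltnP => h; first lia.
  rewrite /g nth_rev; last by lia.
  congr nth; lia.
Qed.

Lemma Y2 (X : (int -> A) -> Prop) x' al w be : lang X x' ->
  morph sigma x' = al ++ w ++ be -> lang (image_shift sigma X) w.
Proof.
move=> [x [Xx [j Hj]]] H.
have Hz := zimg_is_img x.
exists (shiftk (0%N)%:Z (zimg x)); split.
  exists x; split => //; exists 0%N; split; first exact: nonerasing.
  by exists (zimg x).
exists (img_pos sigma x j + (size al)%:Z)%R.
rewrite window_shiftk addr0.
have Hb := img_block Hz (size x') j.
rewrite -Hj H !size_cat window_add window_add in Hb.
case/cat_inj: Hb; first by rewrite size_window.
by move=> _ /cat_inj [] //; rewrite size_window.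
Qed.

End Img.


Lemma lang_left_iff (T : Type) (Z : (int -> T) -> Prop) c u :
  lang Z (c :: u) <-> exists d, lang Z (c :: rcons u d).
Proof.
split; first by move/lang_rext => [d Hd]; exists d.
move=> [d Hd]; apply: (@lang_infix _ _ [::] _ [:: d]); by rewrite /= cats1.
Qed.

Lemma lang_right_iff (T : Type) (Z : (int -> T) -> Prop) u d :
  lang Z (rcons u d) <-> exists c, lang Z (c :: rcons u d).
Proof.
split; first by move/lang_lext => [c Hc]; exists c.
move=> [c Hc]; apply: (@lang_infix _ _ [:: c] _ [::]); by rewrite cats0.
Qed.

Ltac catnorm := rewrite -?cats1 /=; do ?(rewrite -!catA /=).

Section Char.
Variables (A B : finType) (sigma : A -> seq B) (l : B).
Hypothesis Hslp : strongly_left_proper_with sigma l.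
Hypothesis Hinj : injective (morph sigma).
Variable X : (int -> A) -> Prop.

Lemma notin_tail a w : sigma a = l :: w -> l \notin w.
Proof.
move=> E; have [_ Hc] := Hslp a; move: Hc; rewrite E /= eqxx => -[H].
by apply/count_memPn.
Qed.

Lemma suffix_notin a r s : sigma a = r ++ s -> r != [::] -> l \notin s.
Proof.
have [[w Ew] _] := Hslp a.
case: r => [|c r] // E _; have := notin_tail Ew; rewrite Ew in E; case: E => _ ->.
by rewrite mem_cat negb_or => /andP[].
Qed.

Lemma prefix_shape b p r : sigma b = p ++ r -> p != [::] ->
  exists p', p = l :: p' /\ l \notin p' /\ l \notin r.
Proof.
have [[w Ew] _] := Hslp b.
case: p => [|c p] // E _; have := notin_tail Ew; rewrite Ew in E; case: E => <- Ew2.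
by rewrite Ew2 mem_cat negb_or => /andP[H1 H2]; exists p.
Qed.

Lemma morph_lhead v q : exists w, morph sigma v ++ l :: q = l :: w.
Proof.
case: v => [|a v]; first by exists q.
have [[w Ew] _] := Hslp a; rewrite morph_cons Ew; by eexists.
Qed.

Lemma Char s v p' c d : l \notin s -> l \notin p' ->
  lang (image_shift sigma X) (c :: rcons (s ++ morph sigma v ++ l :: p') d) <->
  exists a b, [/\ lang X (a :: rcons v b), (exists r, sigma a = r ++ c :: s),
     (exists r, sigma b = (l :: p') ++ r) & d = nth l (sigma b) (size p').+1].
Proof.
move=> Hs Hp; split.
- move/(Y1 Hslp) => [x' [Hx' [al [be E]]]].
  have [W EW] := morph_lhead v (p' ++ d :: be).
  have E' : morph sigma x' = (al ++ c :: s) ++ l :: W.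
    by rewrite E -EW; catnorm.
  have [x1 [x2 [Ex [E1 E2]]]] := sync Hslp E'.
  case/lastP: x1 Ex E1 => [|x1 a] Ex E1.
    by move: E1 => /(congr1 size); rewrite size_cat /=; lia.
  rewrite morph_rcons in E1.
  have Ha : exists r, sigma a = r ++ c :: s.
    case: (leqP (size (c :: s)) (size (sigma a))) => h.
    + have h' : (size (morph sigma x1) <= size al)%N.
        by move: h (congr1 size E1); rewrite !size_cat /=; lia.
      by have [r [_ ->]] := cat_le E1 h'; exists r.
    + have h' : (size al <= size (morph sigma x1))%N.
        by move: h (congr1 size E1); rewrite !size_cat /=; lia.
      have [r [_ Er]] := cat_le (esym E1) h'.
      case: r Er => [|c' r] Er; first by move: h; rewrite Er ltnn.
      case: Er => _ Er; have [[w Ew] _] := Hslp a.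
      by move: Hs; rewrite Er Ew mem_cat in_cons eqxx /= orbT.
  have E2' : morph sigma x2 = morph sigma v ++ l :: (p' ++ d :: be) by rewrite E2 -EW.
  have [x3 [x4 [Ex2 [E3 E4]]]] := sync Hslp E2'.
  have Ev := Hinj E3; subst x3.
  case: x4 Ex2 E4 => [|b x5] Ex2 E4 //.
  rewrite morph_cons in E4.
  have HX : lang X (a :: rcons v b).
    move: Hx'; rewrite Ex Ex2.
    have -> : rcons x1 a ++ (v ++ b :: x5) = x1 ++ (a :: rcons v b) ++ x5.
      by rewrite cat_rcons; catnorm.
    by move/lang_infix.
  change (sigma b ++ morph sigma x5 = (l :: p') ++ d :: be) in E4.
  case: (ltngtP (size (sigma b)) (size (l :: p'))) => h.
  + have [r [Er Er2]] := cat_le E4 (ltnW h).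
    case: r Er Er2 => [|e r] Er Er2; first by move: h; rewrite Er cats0 ltnn.
    case: x5 Ex2 Er2 E4 => [|b' x5] Ex2 Er2 E4; first by [].
    have [[w' Ew'] _] := Hslp b'; rewrite morph_cons Ew' in Er2.
    case: Er2 => Ee _; subst e.
    have [[w Ew] _] := Hslp b; move: Er; rewrite Ew /= => -[Ep].
    by move: Hp; rewrite Ep mem_cat in_cons eqxx /= orbT.
  + have [r [Er Er2]] := cat_le (esym E4) (ltnW h).
    case: r Er Er2 => [|e r] Er Er2; first by move: h; rewrite Er cats0 ltnn.
    case: Er2 => Ed _; subst e.
    exists a, b; split => //; first by exists (d :: r).
    by rewrite Er nth_cat /= ltnn subnn.
  + case/cat_inj: E4 => // Eb E5.
    case: x5 Ex2 E5 => [|b' x5] Ex2 E5 //.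
    have [[w' Ew'] _] := Hslp b'; rewrite morph_cons Ew' in E5.
    case: E5 => Ed _; subst d.
    exists a, b; split => //; first by exists [::]; rewrite cats0.
    by rewrite Eb nth_default.
- move=> [a [b [HX [r1 E1] [r2 E2] Ed]]].
  have [b' Hb'] := lang_rext HX.
  have [[t' Et'] _] := Hslp b'.
  have Em : morph sigma (rcons (a :: rcons v b) b') =
            r1 ++ c :: s ++ morph sigma v ++ (l :: p') ++ r2 ++ l :: t'.
    by rewrite morph_rcons morph_cons morph_rcons E1 E2 Et' -!catA.
  case: r2 E2 Ed Em => [|e r2] E2 Ed Em.
  + rewrite E2 cats0 nth_default // in Ed; subst d.
    apply: (Y2 Hslp Hb' (al := r1) (be := t')).
    by rewrite Em; catnorm.
  + rewrite E2 nth_cat /= ltnn subnn /= in Ed; subst e.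
    apply: (Y2 Hslp Hb' (al := r1) (be := r2 ++ l :: t')).
    by rewrite Em; catnorm.
Qed.

End Char.


Section Lcp.
Variable B : eqType.
Implicit Types u v w r s : seq B.

Lemma lcp_cat_l w u v : lcp (w ++ u) (w ++ v) = w ++ lcp u v.
Proof. by elim: w => [|x w IH] //=; rewrite eqxx IH. Qed.

Lemma lcp_split u v : exists r1 r2, u = lcp u v ++ r1 /\ v = lcp u v ++ r2.
Proof.
elim: u v => [|x u IH] [|y v] /=; try by do 2 eexists.
case: eqP => [->|_]; last by do 2 eexists.
by have [r1 [r2 [E1 E2]]] := IH v; exists r1, r2; rewrite /= -E1 -E2.
Qed.

Lemma lcp_nil u v : exists r1 r2, [/\ u = lcp u v ++ r1, v = lcp u v ++ r2 & lcp r1 r2 = [::]].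
Proof.
have [r1 [r2 [E1 E2]]] := lcp_split u v; exists r1, r2; split => //.
have H := lcp_cat_l (lcp u v) r1 r2; rewrite -E1 -E2 in H.
have : size (lcp r1 r2) = 0%N by move: (congr1 size H); rewrite !size_cat; lia.
exact: size0nil.
Qed.

Lemma lcs_cat_r r1 r2 s : lcs (r1 ++ s) (r2 ++ s) = lcs r1 r2 ++ s.
Proof. by rewrite /lcs !rev_cat lcp_cat_l rev_cat revK. Qed.

Lemma lcs_nil u v : exists r1 r2, [/\ u = r1 ++ lcs u v, v = r2 ++ lcs u v & lcs r1 r2 = [::]].
Proof.
have [r1 [r2 [E1 E2 E3]]] := lcp_nil (rev u) (rev v).
exists (rev r1), (rev r2); rewrite /lcs; split.
- by rewrite -rev_cat -E1 revK.
- by rewrite -rev_cat -E2 revK.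
- by rewrite !revK E3.
Qed.

Lemma lcs_rcons r1 r2 c : lcs (rcons r1 c) (rcons r2 c) != [::].
Proof. by rewrite -!cats1 lcs_cat_r; case: (lcs r1 r2). Qed.

End Lcp.

Section Letters.
Variables (A B : finType) (sigma : A -> seq B) (l : B).
Hypothesis Hslp : strongly_left_proper_with sigma l.
Hypothesis Hinj : injective (morph sigma).

Lemma sig_inj a a' : sigma a = sigma a' -> a = a'.
Proof.
move=> E; have : morph sigma [:: a] = morph sigma [:: a'] by rewrite /morph /= E.
by move/Hinj => [].
Qed.

Lemma suffix_letter_uniq a r c r' c' s : sigma a = r ++ c :: s -> sigma a = r' ++ c' :: s -> c = c'.
Proof.
move=> E1 E2; have Hs : size r = size r'.
  by move: (congr1 size E1) (congr1 size E2); rewrite !size_cat /=; lia.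
by have [_ [->]] := cat_inj Hs (etrans (esym E1) E2).
Qed.

Lemma not_proper_suffix a a' q : a != a' -> sigma a' = q ++ sigma a -> False.
Proof.
move=> Ha; case: q => [|e q] /= E; first by move/eqP: Ha; apply; apply: sig_inj.
have [[w Ew] _] := Hslp a'; have [[w' Ew'] _] := Hslp a.
have := notin_tail Hslp Ew; rewrite Ew in E; case: E => _ ->.
by rewrite Ew' mem_cat in_cons eqxx /= orbT.
Qed.

Lemma LF a1 a2 : a1 != a2 -> exists r1 c1 r2 c2,
  [/\ sigma a1 = r1 ++ c1 :: lcs (sigma a1) (sigma a2),
      sigma a2 = r2 ++ c2 :: lcs (sigma a1) (sigma a2) & c1 != c2].
Proof.
move=> Ha; have [q1 [q2 [E1 E2 E3]]] := lcs_nil (sigma a1) (sigma a2).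
set s := lcs _ _ in E1 E2 E3 *.
case/lastP: q1 E1 E3 => [|q1 c1] E1 E3.
  by exfalso; apply: (@not_proper_suffix a1 a2 q2 Ha); rewrite E2 E1.
case/lastP: q2 E2 E3 => [|q2 c2] E2 E3.
  by exfalso; apply: (@not_proper_suffix a2 a1 (rcons q1 c1)); rewrite 1?eq_sym // E1 E2.
exists q1, c1, q2, c2; split; rewrite -?cat_rcons //.
by apply/eqP => Ec; subst c2; move: (lcs_rcons q1 q2 c1); rewrite E3.
Qed.

Lemma LF_notin a1 a2 : a1 != a2 -> l \notin lcs (sigma a1) (sigma a2).
Proof.
move=> /LF [r1 [c1 [r2 [c2 [E1 _ _]]]]].
apply: (suffix_notin Hslp (a := a1) (r := rcons r1 c1)); first by rewrite cat_rcons; exact: E1.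
by case: (r1).
Qed.

Lemma RF b1 b2 : b1 != b2 -> exists p' r1 r2,
  [/\ lcp (sigma b1) (sigma b2) = l :: p', sigma b1 = (l :: p') ++ r1, sigma b2 = (l :: p') ++ r2,
      l \notin p' & nth l (sigma b1) (size p').+1 != nth l (sigma b2) (size p').+1].
Proof.
move=> Hb; have [r1 [r2 [E1 E2 E3]]] := lcp_nil (sigma b1) (sigma b2).
have [[w1 Ew1] _] := Hslp b1; have [[w2 Ew2] _] := Hslp b2.
have [p' Ep] : exists p', lcp (sigma b1) (sigma b2) = l :: p' by rewrite Ew1 Ew2 /= eqxx; eexists.
rewrite Ep in E1 E2.
have [q' [Ep' [Hpp Hr1]]] := prefix_shape Hslp E1 isT; case: Ep' => Ep'; subst q'.
have [_ [_ [_ Hr2]]] := prefix_shape Hslp E2 isT.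
exists p', r1, r2; split => //.
rewrite E1 E2 !nth_cat /= !ltnn !subnn.
case: r1 r2 E1 E2 E3 Hr1 Hr2 => [|e1 r1] [|e2 r2] E1 E2 E3 Hr1 Hr2 /=.
- by move/eqP: Hb => Hb; exfalso; apply: Hb; apply: sig_inj; rewrite E1 E2.
- by apply/eqP => Ee; move: Hr2; rewrite -Ee in_cons eqxx.
- by apply/eqP => Ee; move: Hr1; rewrite Ee in_cons eqxx.
- by move: E3 => /=; case: eqP.
Qed.

End Letters.

Section Graph.
Variable V : finType.

Lemma two_neighbors (e : rel V) c v : uniq c -> (3 <= size c)%N -> cycle e c -> v \in c ->
  exists w1 w2, [/\ w1 != w2, e v w1 & e w2 v].
Proof.
move=> Hu Hs Hc Hv; case: (rot_to Hv) => i q Er.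
have := rot_cycle i e c; rewrite Er Hc => Hc'.
have := rot_uniq i c; rewrite Er Hu => Hu'.
have := size_rot i c; rewrite Er => Hs'.
case: q Er Hc' Hu' Hs' => [|y [|w r]] Er Hc' Hu' Hs'; try by rewrite -Hs' in Hs.
exists y, (last w r); move: Hc'; rewrite /cycle rcons_path => /andP[/andP[Hy _] Hl].
split => //; apply/eqP => Ey; move: Hu' => /= /andP[_ /andP[]].
by rewrite Ey mem_last.
Qed.

Lemma hub_tree (vert : pred V) (e : rel V) (side : V -> bool) (h : V) :
  (forall w, vert w) -> (forall u w, e u w = e w u) ->
  (forall u w, e u w -> side u != side w) -> side h ->
  (forall w, ~~ side w -> e h w) -> (forall w, side w -> exists w', e w w') ->
  (forall w, side w -> w != h -> forall w1 w2, e w w1 -> e w w2 -> w1 = w2) ->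
  is_tree vert e.
Proof.
move=> Hv Hsym Hside Hh Hhub Hex Hleaf.
have toh : forall u, connect e u h.
  move=> u; case Su: (side u).
  - have [w' Hw'] := Hex u Su.
    have Sw' : ~~ side w' by have := Hside _ _ Hw'; rewrite Su; case: (side w').
    apply: connect_trans (connect1 Hw') (connect1 _); by rewrite Hsym Hhub.
  - by apply: connect1; rewrite Hsym Hhub // Su.
have fromh : forall u, connect e h u.
  move=> u; case Su: (side u).
  - have [w' Hw'] := Hex u Su.
    have Sw' : ~~ side w' by have := Hside _ _ Hw'; rewrite Su; case: (side w').
    apply: connect_trans (connect1 (Hhub _ Sw')) (connect1 _); by rewrite Hsym.
  - by apply: connect1; rewrite Hhub // Su.
split; first by exists h.
  by move=> u w _ _; apply: connect_trans (toh u) (fromh w).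
move=> [c [Hs Hall Hu Hc]].
have Hsideh : forall w, w \in c -> side w -> w = h.
  move=> w Hw Sw; apply/eqP; apply/negPn/negP => Hne.
  have [w1 [w2 [Hne12 E1 E2]]] := two_neighbors Hu Hs Hc Hw.
  by move/eqP: Hne12; apply; apply: (Hleaf w Sw Hne); rewrite // Hsym.
have Hhc : h \in c.
  case: c Hs Hall Hu Hc Hsideh => [|c0 [|c1 r]] // Hs Hall Hu Hc Hsideh.
  move: Hc; rewrite /= => /andP[E01 _].
  have := Hside _ _ E01; case S0: (side c0) => /=.
  - by rewrite -(Hsideh c0) ?in_cons ?eqxx.
  - by move=> S1; rewrite -(Hsideh c1) ?in_cons ?eqxx ?orbT //; move: S1; case: (side c1).
case: (rot_to Hhc) => i q Er.
have := rot_cycle i e c; rewrite Er Hc => Hc'.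
have := rot_uniq i c; rewrite Er Hu => Hu'.
have := size_rot i c; rewrite Er => Hs'.
case: q Er Hc' Hu' Hs' => [|y [|w r]] Er Hc' Hu' Hs'; try by rewrite -Hs' in Hs.
move: Hc' => /= /andP[Ehy /andP[Eyw _]].
have Sy : ~~ side y by have := Hside _ _ Ehy; rewrite Hh; case: (side y).
have Sw : side w by have := Hside _ _ Eyw; move: Sy; case: (side y); case: (side w).
have Hwc : w \in c by rewrite -(mem_rot i) Er !in_cons eqxx !orbT.
move: Hu' => /= /andP[/negP Hn _]; apply: Hn.
by rewrite (Hsideh w Hwc Sw) !in_cons eqxx orbT.
Qed.

Lemma closed_conn (e : rel V) (S : pred V) u w :
  (forall a b, e a b -> S a -> S b) -> connect e u w -> S u -> S w.
Proof.
move=> HS /connectP [p Hp ->]; elim: p u Hp => [|a p IH] u //= /andP[Hua Hp] Su.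
by apply: IH Hp (HS _ _ Hua Su).
Qed.

End Graph.

Lemma tree_transfer (V W : finType) (vert : pred V) (e : rel V) (vert' : pred W) (e' : rel W)
  (f : V -> W) : injective f -> (forall v, vert' (f v) = vert v) ->
  (forall w, vert' w -> exists v, w = f v) -> (forall u v, e' (f u) (f v) = e u v) ->
  is_tree vert e -> is_tree vert' e'.
Proof.
move=> Hf Hv Hsurj He [[v0 Hv0] Hconn Hacyc].
have Heq : relpre f e' =2 e by move=> ? ?; rewrite /= He.
split.
- by exists (f v0); rewrite Hv.
- move=> w1 w2 H1 H2; have [u1 E1] := Hsurj _ H1; have [u2 E2] := Hsurj _ H2; subst w1 w2; rewrite !Hv in H1 H2.
  have /connectP [p Hp ->] := Hconn _ _ H1 H2.
  apply/connectP; exists (map f p); last by rewrite last_map.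
  by rewrite path_map (eq_path Heq).
- move=> [c' [Hs Hall Hu Hc]]; apply: Hacyc.
  have [c Ec] : exists c, c' = map f c.
    elim: c' Hall {Hs Hu Hc} => [|w c' IH] /=; first by exists [::].
    move=> /andP[/Hsurj [v ->] /IH [c ->]]; by exists (v :: c).
  subst c'; exists c; split.
  + by rewrite size_map in Hs.
  + by move: Hall; rewrite all_map => /allP H; apply/allP => v Hv0'; have := H v Hv0'; rewrite /= Hv.
  + exact: map_uniq Hu.
  + by move: Hc; rewrite cycle_map (eq_cycle Heq).
Qed.


Section SFT.
Variables (A : finType) (F : rel A).
Hypothesis HFs : forall a, exists b, F a b.
Hypothesis HFp : forall b, exists a, F a b.

Definition sft : (int -> A) -> Prop := fun x => forall n : int, F (x n) (x (n + 1)%R).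
Definition succF a := odflt a [pick b | F a b].
Definition predF b := odflt b [pick a | F a b].
Lemma succP a : F a (succF a).
Proof. rewrite /succF; case: pickP => [b //|H]; have [b Hb] := HFs a; by move: (H b); rewrite Hb. Qed.
Lemma predP b : F (predF b) b.
Proof. rewrite /predF; case: pickP => [a //|H]; have [a Ha] := HFp b; by move: (H a); rewrite Ha. Qed.

Definition spath a b : int -> A := fun n =>
  match n with
  | Posz 0 => a
  | Posz k.+1 => iter k succF b
  | Negz m => iter m.+1 predF a
  end.

Lemma spath_sft a b : F a b -> sft (spath a b).
Proof.
move=> Hab; case=> [[|k]|[|m]].
- by have -> : (Posz 0 + 1)%R = Posz 1 by lia.
- have -> : (Posz k.+1 + 1)%R = Posz k.+2 by lia.
  exact: succP.
- have -> : (Negz 0 + 1)%R = Posz 0 by lia.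
  exact: predP.
- have -> : (Negz m.+1 + 1)%R = Negz m by lia.
  exact: predP.
Qed.

Lemma sft_ss : shift_space sft.
Proof.
split.
- move=> x H n; have [y [Hy Hyx]] := H (absz n + 1)%N.
  have E1 : y n = x n by apply: Hyx; lia.
  have E2 : y (n + 1)%R = x (n + 1)%R by apply: Hyx; lia.
  rewrite -E1 -E2; exact: Hy.
- move=> x; split => H n.
  + exact: H.
  + by have := H (n - 1)%R; rewrite /shiftk subrK.
- move=> a; exists (spath a (succF a)); split; first exact: spath_sft (succP a).
  by exists (Posz 0).
Qed.

Lemma sft_lang2 a b : lang sft [:: a; b] <-> F a b.
Proof.
split.
- move=> [x [Hx [i]]]; rewrite /window /= => -[-> ->].
  have -> : (i + Posz 0)%R = i by lia.
  exact: Hx.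
- move=> Hab; exists (spath a b); split; first exact: spath_sft.
  by exists (Posz 0).
Qed.

Lemma sft_lang1 a : lang sft [:: a].
Proof.
have := (sft_lang2 a (succF a)).2 (succP a).
by move/(@lang_infix _ _ [::] [:: a] [:: succF a]).
Qed.

Lemma sft_vert w : ext_vertex (lang sft) [::] w.
Proof. case: w => [a|b] /=; rewrite inE; apply/asboolP; exact: sft_lang1. Qed.

Lemma sft_edge a b : ext_edge (lang sft) [::] (inl a) (inr b) = F a b.
Proof.
rewrite /ext_edge /Eboth /=.
by apply/idP/idP => [/asboolP/sft_lang2 //|H]; apply/asboolP/sft_lang2.
Qed.

Lemma sft_edge' a b : ext_edge (lang sft) [::] (inr b) (inl a) = F a b.
Proof.
rewrite /ext_edge /Eboth /=.
by apply/idP/idP => [/asboolP/sft_lang2 //|H]; apply/asboolP/sft_lang2.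
Qed.

End SFT.


Lemma asbool_iff (P Q : Prop) : (P <-> Q) -> `[< P >] = `[< Q >].
Proof. by move=> H; apply/idP/idP => /asboolP h; apply/asboolP; apply H. Qed.

Lemma card2 (T : finType) (S : {set T}) x y : x \in S -> y \in S -> x != y -> (2 <= #|S|)%N.
Proof. by move=> Hx Hy Hxy; apply/card_gt1P; exists x, y. Qed.

Section Main.
Variables (A B : finType) (sigma : A -> seq B) (l : B).
Hypothesis Hslp : strongly_left_proper_with sigma l.
Hypothesis Hinj : injective (morph sigma).
Variables (e1 e2 : A).
Hypothesis He12 : e1 != e2.

Lemma other (a : A) : exists a' : A, a != a'.
Proof. case: (eqVneq a e1) => [->|H]; [by exists e2 | exists e1; by rewrite H]. Qed.

Definition cLs (s : seq B) (a : A) : B := nth l (rev (sigma a)) (size s).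
Definition dRs (p : seq B) (b : A) : B := nth l (sigma b) (size p).+1.

Lemma cL_eq s a r c : sigma a = r ++ c :: s -> cLs s a = c.
Proof.
move=> E; rewrite /cLs E rev_cat rev_cons nth_cat size_rcons size_rev ltnSn.
by rewrite nth_rcons size_rev ltnn eqxx.
Qed.

Lemma lcs_diff (r1 : seq B) c1 r2 c2 s : c1 != c2 -> lcs (r1 ++ c1 :: s) (r2 ++ c2 :: s) = s.
Proof.
move=> Hc; rewrite -!cat_rcons lcs_cat_r.
by rewrite /lcs !rev_rcons /= (negbTE Hc).
Qed.

Lemma lcp_diff (p q1 q2 : seq B) : nth l q1 0 != nth l q2 0 -> lcp (p ++ q1) (p ++ q2) = p.
Proof.
move=> H; rewrite lcp_cat_l.
case: q1 q2 H => [|x q1] [|y q2] /= H; rewrite ?cats0 //.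
by rewrite (negbTE H) cats0.
Qed.

Lemma forward :
  (exists! t, Tminus sigma t) -> (exists! t, Tplus sigma t) ->
  forall (X : (int -> A) -> Prop) v, dendric (lang X) v -> dendric_preserving sigma X v.
Proof.
move=> [s0 [_ Us]] [p0 [_ Up]] X v [Lv Tv] u
  [Lu [a0 [b0 [s [p [HE0 [s' [Hs' Es']] [p'' [Hp Ep]] Eu]]]]]] [_ [Hm Hpl]].
have Hs := suffix_notin Hslp Es' Hs'.
have [p' [Epp [Hp' _]]] := prefix_shape Hslp Ep Hp; subst p.
set Y := image_shift sigma X.
have CharU : forall c d, lang Y (c :: rcons u d) <->
  exists a b, [/\ lang X (a :: rcons v b), (exists r, sigma a = r ++ c :: s),
     (exists r, sigma b = (l :: p') ++ r) & d = nth l (sigma b) (size p').+1].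
  by move=> c d; rewrite Eu; apply: Char.
have [c1 [c2 [Hc1 Hc2 Hc12]]] := card_gt1P Hm.
move: Hc1 Hc2; rewrite !inE => /asboolP /lang_left_iff [d1' /CharU [a1 [b1' [_ [r1 E1] _ _]]]].
move=> /asboolP /lang_left_iff [d2' /CharU [a2 [b2' [_ [r2 E2] _ _]]]].
have Ha12 : a1 != a2.
  by apply/eqP => Ea; subst a2; move/eqP: Hc12; apply; apply: suffix_letter_uniq E1 E2.
have Hs0 : s0 = s by apply: Us; exists a1, a2; split => //; rewrite E1 E2 lcs_diff.
subst s0.
have Hall_s : forall a a', a != a' -> lcs (sigma a) (sigma a') = s.
  by move=> a a' H; symmetry; apply: Us; exists a, a'.
have [d1 [d2 [Hd1 Hd2 Hd12]]] := card_gt1P Hpl.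
move: Hd1 Hd2; rewrite !inE => /asboolP /lang_right_iff [c1' /CharU [a1' [b1 [_ _ [q1 F1] D1]]]].
move=> /asboolP /lang_right_iff [c2' /CharU [a2' [b2 [_ _ [q2 F2] D2]]]].
have Hb12 : b1 != b2 by apply/eqP => Eb; subst b2; move/eqP: Hd12; apply; rewrite D1 D2.
have Hp0 : p0 = l :: p'.
  apply: Up; exists b1, b2; split => //; rewrite F1 F2 lcp_diff //.
  by move: D1 D2; rewrite F1 F2 !nth_cat /= !ltnn !subnn => <- <-.
subst p0.
have Hall_p : forall b b', b != b' -> lcp (sigma b) (sigma b') = l :: p'.
  by move=> b b' H; symmetry; apply: Up; exists b, b'.
have Hc : forall a, exists r, sigma a = r ++ (cLs s) a :: s.
  move=> a; have [a' Ha'] := other a.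
  have [r [c [_ [_ [Ea _ _]]]]] := LF Hslp Hinj Ha'.
  rewrite Hall_s // in Ea; exists r; by rewrite (cL_eq Ea).
have Hd : forall b, exists q, sigma b = (l :: p') ++ q.
  move=> b; have [b' Hb'] := other b.
  have [q [q' [E _]]] := lcp_split (sigma b) (sigma b').
  by exists q; rewrite E Hall_p.
have cL_inj : injective (cLs s).
  move=> a a' E; apply/eqP; apply/negPn/negP => H.
  have [r [c [r' [c' [Ea Ea' Hcc]]]]] := LF Hslp Hinj H.
  rewrite Hall_s // in Ea Ea'.
  by move: Hcc; rewrite -(cL_eq Ea) -(cL_eq Ea') E eqxx.
have dR_inj : injective (dRs p').
  move=> b b' E; apply/eqP; apply/negPn/negP => H.
  have [q [r [r' [Eq _ _ _ Hn]]]] := RF Hslp Hinj H.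
  rewrite Hall_p // in Eq; case: Eq => Eq; subst q.
  by move: Hn; rewrite /dRs in E; rewrite E eqxx.
have Key : forall c d, lang Y (c :: rcons u d) <->
   exists a b, [/\ lang X (a :: rcons v b), c = (cLs s) a & d = (dRs p') b].
  move=> c d; rewrite CharU; split.
  - move=> [a [b [HX [r Ea] _ Ed]]]; exists a, b; split => //.
    by rewrite (cL_eq Ea).
  - move=> [a [b [HX -> ->]]]; exists a, b; split => //; by [apply: Hc | apply: Hd].

set f := fun w : A + A => match w with inl a => inl ((cLs s) a) | inr b => inr ((dRs p') b) end.
split => //.
apply: (@tree_transfer _ _ _ _ _ _ f) Tv.
- by move=> [a|b] [a'|b'] //= [] /= E; [rewrite (cL_inj _ _ E) | rewrite (dR_inj _ _ E)].
- case=> [a|b] /=; rewrite !inE; apply: asbool_iff.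
  + rewrite lang_left_iff lang_left_iff; split.
    * by move=> [d /Key [a' [b [HX Ea _]]]]; move/cL_inj: Ea => Ea; subst a'; exists b.
    * by move=> [b HX]; exists ((dRs p') b); apply/Key; exists a, b.
  + rewrite lang_right_iff lang_right_iff; split.
    * by move=> [c /Key [a [b' [HX _ Eb]]]]; move/dR_inj: Eb => Eb; subst b'; exists a.
    * by move=> [a HX]; exists ((cLs s) a); apply/Key; exists a, b.
- case=> [c|d] /=; rewrite inE => /asboolP.
  + by move=> /lang_left_iff [d /Key [a [b [_ -> _]]]]; exists (inl a).
  + by move=> /lang_right_iff [c /Key [a [b [_ _ ->]]]]; exists (inr b).
- case=> [a|b] [a'|b'] //=; apply: asbool_iff; rewrite /Eboth Key; split.
  + by move=> [a3 [b3 [HX Ea Eb]]]; move/cL_inj: Ea => Ea; move/dR_inj: Eb => Eb; subst.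
  + by move=> HX; exists a, b'.
  + by move=> [a3 [b3 [HX Ea Eb]]]; move/cL_inj: Ea => Ea; move/dR_inj: Eb => Eb; subst.
  + by move=> HX; exists a', b.
Qed.

End Main.


Section Back.
Variables (A B : finType) (sigma : A -> seq B) (l : B).
Hypothesis Hslp : strongly_left_proper_with sigma l.
Hypothesis Hinj : injective (morph sigma).

Definition H2prop := forall X : (int -> A) -> Prop, shift_space X ->
     forall v : seq A, bispecial (lang X) v -> dendric (lang X) v ->
       dendric_preserving sigma X v.

Lemma cex_core (F : rel A) x y b1 b2 s p' rx cx ry cy q1 q2 :
  sigma x = rx ++ cx :: s -> sigma y = ry ++ cy :: s -> cx != cy -> l \notin s ->
  sigma b1 = (l :: p') ++ q1 -> sigma b2 = (l :: p') ++ q2 -> l \notin p' ->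
  dRs sigma l p' b1 != dRs sigma l p' b2 ->
  forall (HFs : forall a, exists b, F a b) (HFp : forall b, exists a, F a b),
  F x b1 -> F y b2 ->
  is_tree (ext_vertex (lang (sft F)) [::]) (ext_edge (lang (sft F)) [::]) ->
  (forall a b c, F a b -> (exists r, sigma a = r ++ c :: s) ->
      (exists q, sigma b = (l :: p') ++ q) -> (c == cy) = (dRs sigma l p' b == dRs sigma l p' b2)) ->
  H2prop -> False.
Proof.
move=> Ex Ey Hcxy Hs Eb1 Eb2 Hp' Hd12 HFs HFp Fx Fy Htree INV H2.
set X := sft F.
have HX2 : forall a b, F a b -> lang X (a :: rcons [::] b).
  by move=> a b Hab; apply/(sft_lang2 HFs HFp).
have CharU := fun c d => @Char A B sigma l Hslp Hinj X s [::] p' c d Hs Hp'.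
set u := s ++ morph sigma [::] ++ l :: p'.
have Lxc : lang (image_shift sigma X) (cx :: rcons u (dRs sigma l p' b1)).
  apply/CharU; exists x, b1; split => //; [exact: HX2 | by exists rx | by exists q1].
have Lyc : lang (image_shift sigma X) (cy :: rcons u (dRs sigma l p' b2)).
  apply/CharU; exists y, b2; split => //; [exact: HX2 | by exists ry | by exists q2].
have Hxy : x != y by apply/eqP => Exy; subst y; move/eqP: Hcxy; apply; apply: suffix_letter_uniq Ex Ey.
have Hb12 : b1 != b2 by apply/eqP => Eb; subst b2; move/eqP: Hd12.
have L0 : lang X [::].
  by have := sft_lang1 HFs HFp x; move/(@lang_infix _ _ [::] [::] [:: x]).
have Hbisp : bispecial (lang X) [::].
  split => //; split.
  - by apply/card_gt1P; exists x, y; split => //; rewrite inE; apply/asboolP; apply: sft_lang1.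
  - by apply/card_gt1P; exists b1, b2; split => //; rewrite inE; apply/asboolP; apply: sft_lang1.
have Lu : lang (image_shift sigma X) u.
  by move: Lxc; rewrite -cats1 -cat_cons -[cx :: u]cat1s -catA => /lang_infix.
have Hext : ext_image sigma X [::] u.
  split => //.
  exists x, b1, s, (l :: p'); split => //.
  * exact: HX2.
  * by exists (rcons rx cx); rewrite cat_rcons; split => //; case: (rx).
  * by exists q1.
have Hbu : bispecial (lang (image_shift sigma X)) u.
  split => //; split.
  + apply/card_gt1P; exists cx, cy; split => //; rewrite inE; apply/asboolP; apply/lang_left_iff.
    * by exists (dRs sigma l p' b1).
    * by exists (dRs sigma l p' b2).
  + apply/card_gt1P; exists (dRs sigma l p' b1), (dRs sigma l p' b2); split => //; rewrite inE; apply/asboolP;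
     apply/lang_right_iff.
    * by exists cx.
    * by exists cy.
have [_ [_ Hconn _]] := H2 X (sft_ss HFs HFp) [::] Hbisp (conj L0 Htree) u Hext Hbu.
have V1 : ext_vertex (lang (image_shift sigma X)) u (inl cy).
  by rewrite /= inE; apply/asboolP/lang_left_iff; exists (dRs sigma l p' b2).
have V2 : ext_vertex (lang (image_shift sigma X)) u (inr (dRs sigma l p' b1)).
  by rewrite /= inE; apply/asboolP/lang_right_iff; exists cx.
have := Hconn _ _ V1 V2.
set S := fun w : B + B => match w with inl c => c == cy | inr d => d == dRs sigma l p' b2 end.
move/(@closed_conn _ _ (S : pred _)).
have Hcl : forall w1 w2, ext_edge (lang (image_shift sigma X)) u w1 w2 -> S w1 -> S w2.
  move=> [c|d] [c'|d'] //= /asboolP HE.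
  - move: HE; rewrite /Eboth => /CharU [a [b [HXab Ea Eb Ed]]].
    have Fab : F a b by apply/(sft_lang2 HFs HFp).
    by rewrite Ed -/(dRs sigma l p' b) -(INV a b c Fab Ea Eb).
  - move: HE; rewrite /Eboth => /CharU [a [b [HXab Ea Eb Ed]]].
    have Fab : F a b by apply/(sft_lang2 HFs HFp).
    by rewrite Ed -/(dRs sigma l p' b) -(INV a b c' Fab Ea Eb).
move/(_ Hcl); rewrite /S eqxx => /(_ isT) /eqP E.
by move/eqP: Hd12.
Qed.


Lemma cexA (x y z b1 b2 : A) : x != y -> b1 != b2 ->
  ~ (exists r, sigma z = r ++ lcs (sigma x) (sigma y)) -> H2prop -> False.
Proof.
move=> Hxy Hb12 Nz H2.
have [rx [cx [ry [cy [Ex Ey Hc]]]]] := LF Hslp Hinj Hxy.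
have Hs := LF_notin Hslp Hinj Hxy.
set s := lcs (sigma x) (sigma y) in Ex Ey Hs Nz.
have [p' [q1 [q2 [_ Eb1 Eb2 Hp' Hd]]]] := RF Hslp Hinj Hb12.
have Hd' : dRs sigma l p' b1 != dRs sigma l p' b2 := Hd.
have Hzx : z != x by apply/eqP => Ez; subst z; apply: Nz; exists (rcons rx cx); rewrite cat_rcons.
have Hzy : z != y by apply/eqP => Ez; subst z; apply: Nz; exists (rcons ry cy); rewrite cat_rcons.
set g := fun a => if cLs sigma l s a == cy then b2 else b1.
set F := fun a b => (a == z) || ((a == x) && (b == b1)) || ((a == y) && (b == b2))
                    || ((a \notin [:: x; y; z]) && (b == g a)).
have Funiq : forall a b, a != z -> F a b -> b = (if a == x then b1 else if a == y then b2 else g a).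
  move=> a b Haz; rewrite /F !inE (negbTE Haz) /=.
  case: (eqVneq a x) => [->|Hax] /=; first by rewrite (negbTE Hxy) /= !orbF => /eqP.
  case: (eqVneq a y) => [->|Hay] /=; first by rewrite ?orbF => /eqP.
  by rewrite ?orbF => /eqP.
have HFs : forall a, exists b, F a b.
  move=> a; case: (eqVneq a z) => [->|Haz]; first by exists b1; rewrite /F eqxx.
  exists (if a == x then b1 else if a == y then b2 else g a); rewrite /F !inE (negbTE Haz) /=.
  case: (eqVneq a x) => [->|Hax] /=; first by rewrite eqxx.
  case: (eqVneq a y) => [->|Hay] /=; first by rewrite eqxx.
  by rewrite eqxx.
have HFp : forall b, exists a, F a b by move=> b; exists z; rewrite /F eqxx.
apply: (@cex_core F x y b1 b2 s p' rx cx ry cy q1 q2) => //.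
- by rewrite /F !eqxx /= ?orbT.
- by rewrite /F !eqxx /= ?orbT.
- apply: (@hub_tree _ _ _ (fun w => if w is inl _ then true else false) (inl z)).
  + exact: sft_vert.
  + by move=> [?|?] [?|?].
  + by move=> [?|?] [?|?].
  + by [].
  + by move=> [a|b] //= _; apply/asboolP/(sft_lang2 HFs HFp); rewrite /F eqxx.
  + move=> [a|b] //= _; have [b Hb] := HFs a; exists (inr b).
    by apply/asboolP/(sft_lang2 HFs HFp).
  + move=> [a|b] //= _ Haz [a1|b1'] [a2|b2'] //= /asboolP/(sft_lang2 HFs HFp) H1
      /asboolP/(sft_lang2 HFs HFp) H2'.
    have Haz' : a != z by apply: contraNneq Haz => ->.
    by rewrite (Funiq _ _ Haz' H1) (Funiq _ _ Haz' H2').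
- move=> a b c Fab [r Ea] Hb.
  have Haz : a != z by apply/eqP => Ez; subst a; apply: Nz; exists (rcons r c); rewrite cat_rcons.
  have Ec := cL_eq l Ea; rewrite -Ec.
  rewrite (Funiq _ _ Haz Fab).
  case: (eqVneq a x) => [Eax|Hax]; first by subst a; rewrite (cL_eq l Ex) (negbTE Hc) (negbTE Hd').
  case: (eqVneq a y) => [Eay|Hay]; first by subst a; rewrite (cL_eq l Ey) !eqxx.
  rewrite /g; case: (eqVneq (cLs sigma l s a) cy) => [_|_] /=; [by rewrite eqxx | by rewrite (negbTE Hd')].

Qed.

Lemma cexB (x y b1 b2 b3 : A) : x != y -> b1 != b2 ->
  ~ (exists q, sigma b3 = lcp (sigma b1) (sigma b2) ++ q) -> H2prop -> False.
Proof.
move=> Hxy Hb12 Nb H2.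
have [rx [cx [ry [cy [Ex Ey Hc]]]]] := LF Hslp Hinj Hxy.
have Hs := LF_notin Hslp Hinj Hxy.
set s := lcs (sigma x) (sigma y) in Ex Ey Hs.
have [p' [q1 [q2 [Elcp Eb1 Eb2 Hp' Hd]]]] := RF Hslp Hinj Hb12.
have Hd' : dRs sigma l p' b1 != dRs sigma l p' b2 := Hd.
rewrite Elcp in Nb.
have Hb31 : b3 != b1 by apply/eqP => Eb; subst b3; apply: Nb; exists q1.
have Hb32 : b3 != b2 by apply/eqP => Eb; subst b3; apply: Nb; exists q2.
set h := fun b => if dRs sigma l p' b == dRs sigma l p' b2 then y else x.
set F := fun a b => (b == b3) || ((a == x) && (b == b1)) || ((a == y) && (b == b2))
                    || ((b \notin [:: b1; b2; b3]) && (a == h b)).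
have Funiq : forall a b, b != b3 -> F a b -> a = (if b == b1 then x else if b == b2 then y else h b).
  move=> a b Hb3; rewrite /F !inE (negbTE Hb3) /=.
  case: (eqVneq b b1) => [->|Hb1] /=.
    by rewrite (negbTE Hb12) /= andbF andbT !orbF => /eqP.
  case: (eqVneq b b2) => [->|Hb2] /=; first by rewrite andbF andbT /= orbF => /eqP.
  by rewrite !andbF /= => /eqP.
have HFp : forall b, exists a, F a b.
  move=> b; case: (eqVneq b b3) => [->|Hb3]; first by exists x; rewrite /F eqxx.
  exists (if b == b1 then x else if b == b2 then y else h b); rewrite /F !inE (negbTE Hb3) /=.
  case: (eqVneq b b1) => [->|Hb1] /=; first by rewrite eqxx.
  case: (eqVneq b b2) => [->|Hb2] /=; first by rewrite eqxx /= orbT.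
  by rewrite eqxx !orbT.
have HFs : forall a, exists b, F a b by move=> a; exists b3; rewrite /F eqxx.
apply: (@cex_core F x y b1 b2 s p' rx cx ry cy q1 q2) => //.
- by rewrite /F !eqxx /= ?(orbT, orTb).
- by rewrite /F !eqxx /= ?(orbT, orTb, andbT).
- apply: (@hub_tree _ _ _ (fun w => if w is inr _ then true else false) (inr b3)).
  + exact: sft_vert.
  + by move=> [?|?] [?|?].
  + by move=> [?|?] [?|?].
  + by [].
  + by move=> [a|b] //= _; apply/asboolP/(sft_lang2 HFs HFp); rewrite /F eqxx.
  + move=> [a|b] //= _; have [a Ha] := HFp b; exists (inl a).
    by apply/asboolP/(sft_lang2 HFs HFp).
  + move=> [a|b] //= _ Hbz [a1|b1'] [a2|b2'] //= /asboolP/(sft_lang2 HFs HFp) H1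
      /asboolP/(sft_lang2 HFs HFp) H2'.
    have Hbz' : b != b3 by apply: contraNneq Hbz => ->.
    by rewrite (Funiq _ _ Hbz' H1) (Funiq _ _ Hbz' H2').
- move=> a b c Fab [r Ea] [q Eq].
  have Hb3 : b != b3 by apply/eqP => Eb; subst b; apply: Nb; exists q.
  have Ec := cL_eq l Ea; rewrite -Ec.
  rewrite (Funiq _ _ Hb3 Fab).
  case: (eqVneq b b1) => [Eb|Hb1]; first by subst b; rewrite (cL_eq l Ex) (negbTE Hc) (negbTE Hd').
  case: (eqVneq b b2) => [Eb|Hb2]; first by subst b; rewrite (cL_eq l Ey) !eqxx.
  rewrite /h; case: (eqVneq (dRs sigma l p' b) (dRs sigma l p' b2)) => [_|_] /=; [by rewrite (cL_eq l Ey) eqxx | by rewrite (cL_eq l Ex) (negbTE Hc)].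
Qed.

End Back.


Section Fin.
Variables (A B : finType) (sigma : A -> seq B) (l : B).
Hypothesis Hslp : strongly_left_proper_with sigma l.
Hypothesis Hinj : injective (morph sigma).

Lemma back_minus_aux (a1 a2 a3 a4 : A) : H2prop sigma -> a1 != a2 -> a3 != a4 ->
  (size (lcs (sigma a3) (sigma a4)) <= size (lcs (sigma a1) (sigma a2)))%N ->
  lcs (sigma a1) (sigma a2) = lcs (sigma a3) (sigma a4).
Proof.
move=> H2 H12 H34 Hle; apply/eqP; apply/negPn/negP => Hne.
case: (pselect (exists r, sigma a3 = r ++ lcs (sigma a1) (sigma a2))) => [[r3 E3]|N3];
  last exact: (cexA Hslp Hinj H12 H12 N3 H2).
case: (pselect (exists r, sigma a4 = r ++ lcs (sigma a1) (sigma a2))) => [[r4 E4]|N4];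
  last exact: (cexA Hslp Hinj H12 H12 N4 H2).
move: Hle Hne; rewrite [in lcs (sigma a3) _]E3 [in lcs _ (sigma a4)]E4 lcs_cat_r size_cat => Hle Hne.
have E0 : lcs r3 r4 = [::] by apply: size0nil; lia.
by move: Hne; rewrite E0 eqxx.
Qed.

Lemma back_minus (a1 a2 a3 a4 : A) : H2prop sigma -> a1 != a2 -> a3 != a4 ->
  lcs (sigma a1) (sigma a2) = lcs (sigma a3) (sigma a4).
Proof.
move=> H2 H12 H34.
case: (leqP (size (lcs (sigma a3) (sigma a4))) (size (lcs (sigma a1) (sigma a2)))) => h.
- exact: back_minus_aux.
- by symmetry; apply: back_minus_aux => //; apply: ltnW.
Qed.

Lemma back_plus_aux (b1 b2 b3 b4 : A) : H2prop sigma -> b1 != b2 -> b3 != b4 ->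
  (size (lcp (sigma b3) (sigma b4)) <= size (lcp (sigma b1) (sigma b2)))%N ->
  lcp (sigma b1) (sigma b2) = lcp (sigma b3) (sigma b4).
Proof.
move=> H2 H12 H34 Hle; apply/eqP; apply/negPn/negP => Hne.
case: (pselect (exists q, sigma b3 = lcp (sigma b1) (sigma b2) ++ q)) => [[r3 E3]|N3];
  last exact: (cexB Hslp Hinj H12 H12 N3 H2).
case: (pselect (exists q, sigma b4 = lcp (sigma b1) (sigma b2) ++ q)) => [[r4 E4]|N4];
  last exact: (cexB Hslp Hinj H12 H12 N4 H2).
move: Hle Hne; rewrite [in lcp (sigma b3) _]E3 [in lcp _ (sigma b4)]E4 lcp_cat_l size_cat => Hle Hne.
have E0 : lcp r3 r4 = [::] by apply: size0nil; lia.
by move: Hne; rewrite E0 cats0 eqxx.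
Qed.

Lemma back_plus (b1 b2 b3 b4 : A) : H2prop sigma -> b1 != b2 -> b3 != b4 ->
  lcp (sigma b1) (sigma b2) = lcp (sigma b3) (sigma b4).
Proof.
move=> H2 H12 H34.
case: (leqP (size (lcp (sigma b3) (sigma b4))) (size (lcp (sigma b1) (sigma b2)))) => h.
- exact: back_plus_aux.
- by symmetry; apply: back_plus_aux => //; apply: ltnW.
Qed.
End Fin.

Unset Implicit Arguments.

Theorem corollary4p7 (A B : finType) (sigma : A -> seq B) :
  (1 < #|A|)%N ->
  injective (morph sigma) ->
  strongly_left_proper sigma ->
  ((exists! t, Tminus sigma t) /\ (exists! t, Tplus sigma t)) <->
  (forall X : (int -> A) -> Prop, shift_space X ->
     forall v : seq A, bispecial (lang X) v -> dendric (lang X) v ->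
       dendric_preserving sigma X v).
Proof.
move=> HA Hinj [l Hslp].
have [e1 [e2 [_ _ He12]]] := card_gt1P HA.
split.
- move=> [Hm Hp] X _ v _ Hd; exact: (forward Hslp Hinj He12 Hm Hp Hd).
- move=> H2; split.
  + exists (lcs (sigma e1) (sigma e2)); split; first by exists e1, e2.
    by move=> t [a1 [a2 [H ->]]]; apply: (back_minus Hslp Hinj).
  + exists (lcp (sigma e1) (sigma e2)); split; first by exists e1, e2.
    by move=> t [a1 [a2 [H ->]]]; apply: (back_plus Hslp Hinj).
Qed.
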